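(* Let $h$ be a positive integer and $L$ an $h$-modular lattice with zero. Let $x\in\mathcal{A}'$ and let $n,k$ be nonnegative integers. If $n\geq d(x)$, then $x^{(k)}(a_n)=x(a_\infty)$ and $x^{(k)}(b_n)=x(b_\infty)$. In particular, $d(x^{(k)})\leq d(x)$.
   Context: $K$ is the lattice consisting of $\varnothing$, $C=\{c\}$, $A_m=\{a_k:k\geq m\}$, $B_n=\{b_k:k\geq n\}$ ($m,n<\omega$), and $C\cup A_m\cup B_n$ with $|m-n|\leq1$, ordered by inclusion; $a_n,b_n,c$ denote $A_n,B_n,C$, so $\mathrm{J}(K)=\{c\}\cup\{a_n\}\cup\{b_n\}$ with $a_0>a_1>\cdots$, $b_0>b_1>\cdots$ and no other comparabilities. $\mathcal{A}$ is the set of antitone maps $x\colon\mathrm{J}(K)\to L$ ($p\leq q\Rightarrow x(p)\geq x(q)$) with finite range. For $x\in\mathcal{A}$, $x(a_\infty)$, $x(b_\infty)$ are the eventual values of the increasing sequences $(x(a_n))$, $(x(b_n))$, and $d(x)$ is the least $d\geq0$ with $x(a_n)=x(a_\infty)$ and $x(b_n)=x(b_\infty)$ for all $n\geq d$. The map $x^{(1)}$ is defined by $x^{(1)}(c)=x(c)\vee(x(a_\infty)\wedge x(b_\infty))$, $x^{(1)}(a_0)=x(a_0)$, $x^{(1)}(b_0)=x(b_0)$, $x^{(1)}(a_{n+1})=x(a_{n+1})\vee(x(b_n)\wedge x(c))$, $x^{(1)}(b_{n+1})=x(b_{n+1})\vee(x(a_n)\wedge x(c))$; $\mathcal{A}$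 is closed under $x\mapsto x^{(1)}$, and $x^{(0)}=x$, $x^{(k+1)}=(x^{(k)})^{(1)}$. Put $\ell(x)=\langle x(a_\infty),x(b_\infty),x(c)\rangle$ and $\mathcal{A}'=\{x\in\mathcal{A}:\ell(x^{(1)})=\ell(x)\}$. $L$ is $h$-modular if $u^{(h+1)}=u^{(h)}$ for all $u\in L^3$, where $\langle x,y,z\rangle^{(1)}=\langle x\vee(y\wedge z),y\vee(x\wedge z),z\vee(x\wedge y)\rangle$. *)

(* Defs.v *)
From HB Require Import structures.
From mathcomp Require Import all_boot all_order.
From Stdlib Require Import ClassicalEpsilon.
Set Implicit Arguments. Unset Strict Implicit. Unset Printing Implicit Defensive.
Import Order.TTheory.
Local Open Scope order_scope.

(* The join-irreducibles J(K) = {c} ∪ {a_n} ∪ {b_n}. *)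
Inductive JK : Type := Jc | Ja of nat | Jb of nat.

Definition JK_le (p q : JK) : bool :=
  match p, q with
  | Jc, Jc => true
  | Ja n, Ja m => (m <= n)%N
  | Jb n, Jb m => (m <= n)%N
  | _, _ => false
  end.

Section A.
Context {disp : Order.disp_t} {L : latticeType disp}.

Definition inA (x : JK -> L) : Prop :=
  (forall p q, JK_le p q -> x q <= x p) /\
  (exists s : seq L, forall p, x p \in s).

Definition aInf (x : JK -> L) : L :=
  epsilon (inhabits (x Jc))
    (fun v => exists N, forall n, (N <= n)%N -> x (Ja n) = v).
Definition bInf (x : JK -> L) : L :=
  epsilon (inhabits (x Jc))
    (fun v => exists N, forall n, (N <= n)%N -> x (Jb n) = v).

Definition stab (x : JK -> L) (d : nat) : Prop :=
  forall n, (d <= n)%N -> x (Ja n) = aInf x /\ x (Jb n) = bInf x.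
Definition dx (x : JK -> L) : nat :=
  epsilon (inhabits 0%N)
    (fun d => stab x d /\ forall d', stab x d' -> (d <= d')%N).

Definition step (x : JK -> L) : JK -> L := fun p =>
  match p with
  | Jc => x Jc `|` (aInf x `&` bInf x)
  | Ja 0 => x (Ja 0)
  | Jb 0 => x (Jb 0)
  | Ja n.+1 => x (Ja n.+1) `|` (x (Jb n) `&` x Jc)
  | Jb n.+1 => x (Jb n.+1) `|` (x (Ja n) `&` x Jc)
  end.

Definition stepk (k : nat) (x : JK -> L) : JK -> L := iter k step x.

Definition ell (x : JK -> L) : L * L * L := (aInf x, bInf x, x Jc).

Definition inA' (x : JK -> L) : Prop := inA x /\ ell (step x) = ell x.

Definition tri_step (u : L * L * L) : L * L * L :=
  let: (x, y, z) := u in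
  (x `|` (y `&` z), y `|` (x `&` z), z `|` (x `&` y)).

Definition hmodular (h : nat) : Prop :=
  forall u : L * L * L, iter h.+1 tri_step u = iter h tri_step u.
End A.

(* Main.v *)
Require Import Defs.
From HB Require Import structures.
From mathcomp Require Import all_boot all_order.
From Stdlib Require Import Classical ClassicalEpsilon Lia.
From mathcomp Require Import zify.
Import Order.TTheory.
Set Implicit Arguments.

Lemma ex_least (P : nat -> Prop) :
  (exists n, P n) -> exists m, P m /\ forall d, P d -> (m <= d)%N.
Proof.
move=> [n Pn].
suff H : forall b k, (k <= b)%N -> P k -> exists m, P m /\ forall d, P d -> (m <= d)%N.
  exact: (H n n (leqnn n) Pn).
elim=> [|b IH] k Hk Pk.
  exists k; split => // d _; by move: Hk; rewrite leqn0 => /eqP ->.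
case: (classic (exists k', (k' <= b)%N /\ P k')) => [[k' [Hk' Pk']]|Hn].
  exact: (IH k' Hk' Pk').
exists k; split => // d Pd; case: (leqP k d) => // Hdk.
exfalso; apply: Hn; exists d; split => //; rewrite -ltnS; exact: leq_trans Hdk Hk.
Qed.

Lemma mono_bounded (g : nat -> nat) (B : nat) :
  (forall n, (g n <= B)%N) -> (forall n m, (n <= m)%N -> (g n <= g m)%N) ->
  forall N, exists M, (N <= M)%N /\ forall n, (M <= n)%N -> g n = g M.
Proof.
move=> Hb Hm.
suff H : forall k N, (B - g N < k)%N -> exists M, (N <= M)%N /\ forall n, (M <= n)%N -> g n = g M.
  by move=> N; apply: (H (B - g N).+1 N).
elim=> [//|k IH] N HN.
case: (classic (exists n, (N <= n)%N /\ g n <> g N)) => [[n [Hn Hne]]|Hno].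
  have Hlt : (g N < g n)%N.
    by rewrite ltn_neqAle (Hm _ _ Hn) andbT; apply/eqP => E; apply: Hne.
  have [M [HM1 HM2]] : exists M, (n <= M)%N /\ forall n', (M <= n')%N -> g n' = g M.
    apply: IH; have := Hb n; have := Hb N; move: HN Hlt; clear; lia.
  exists M; split => //; exact: leq_trans Hn HM1.
exists N; split => // n Hn; apply: NNPP => Hne; apply: Hno; exists n; split => //.
Qed.

Section S.
Context {disp : Order.disp_t} {L : latticeType disp}.
Local Open Scope order_scope.

Lemma count_lt (s : seq L) (p q : pred L) z :
  (forall y, p y -> q y) -> z \in s -> q z -> ~~ p z -> (count p s < count q s)%N.
Proof.
move=> Hpq; elim: s => [//|y s IH]; rewrite inE /= => /orP [/eqP <-|Hz] Hq Hp.
  rewrite (negbTE Hp) Hq add0n add1n ltnS.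
  by apply: sub_count => w /Hpq.
have := IH Hz Hq Hp; case Py: (p y); first by rewrite (Hpq _ Py).
by case: (q y) => /= H; lia.
Qed.

Lemma eventually (f : nat -> L) (s : seq L) :
  (forall n, f n \in s) -> (forall n m, (n <= m)%N -> f n <= f m) ->
  exists N, forall n, (N <= n)%N -> f n = f N.
Proof.
move=> Hs Hm.
pose g n := count (fun y => y <= f n) s.
have [M [_ HM]] := @mono_bounded g (size s) (fun n => count_size _ _)
   (fun n m H => sub_count (fun y (Hy : y <= f n) => le_trans Hy (Hm _ _ H)) s) 0.
exists M => n Hn; apply/eqP; rewrite eq_le (Hm M n Hn) andbT.
apply: contraT => Hne.
have : (g M < g n)%N.
  apply: (@count_lt s _ _ (f n)) => //.
  by move=> y /= Hy; exact: le_trans Hy (Hm _ _ Hn).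
by rewrite /g -/(g n) (HM n Hn) ltnn.
Qed.

Lemma aInf_spec (x : JK -> L) N v :
  (forall n, (N <= n)%N -> x (Ja n) = v) -> aInf x = v.
Proof.
move=> H.
have E : exists v, exists N, forall n, (N <= n)%N -> x (Ja n) = v by exists v, N.
have [N' HN'] := epsilon_spec (inhabits (x Jc)) _ E.
rewrite -/(aInf x) in HN'.
by rewrite -(HN' (maxn N N') (leq_maxr _ _)) H // leq_maxl.
Qed.

Lemma bInf_spec (x : JK -> L) N v :
  (forall n, (N <= n)%N -> x (Jb n) = v) -> bInf x = v.
Proof.
move=> H.
have E : exists v, exists N, forall n, (N <= n)%N -> x (Jb n) = v by exists v, N.
have [N' HN'] := epsilon_spec (inhabits (x Jc)) _ E.
rewrite -/(bInf x) in HN'.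
by rewrite -(HN' (maxn N N') (leq_maxr _ _)) H // leq_maxl.
Qed.

Lemma dx_spec (x : JK -> L) d :
  stab x d -> stab x (dx x) /\ (dx x <= d)%N.
Proof.
move=> Hd.
have E := @ex_least (stab x) (ex_intro _ d Hd).
have [H1 H2] := epsilon_spec (inhabits 0%N) _ E.
by split => //; apply: H2.
Qed.

Lemma inA_stab (x : JK -> L) : inA x -> exists d, stab x d.
Proof.
move=> [Hm [s Hs]].
have [Na HNa] := @eventually (fun n => x (Ja n)) s (fun n => Hs _)
  (fun n m H => Hm (Ja m) (Ja n) H).
have [Nb HNb] := @eventually (fun n => x (Jb n)) s (fun n => Hs _)
  (fun n m H => Hm (Jb m) (Jb n) H).
exists (maxn Na Nb) => n Hn; split.
- rewrite (@aInf_spec x Na (x (Ja Na))) ?HNa //; first exact: leq_trans (leq_maxl _ _) Hn.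
- rewrite (@bInf_spec x Nb (x (Jb Nb))) ?HNb //; first exact: leq_trans (leq_maxr _ _) Hn.
Qed.


Definition Inv (al be ga : L) (d : nat) (y : JK -> L) : Prop :=
  (forall m, y (Ja m) <= al /\ y (Jb m) <= be) /\ y Jc = ga /\
  (forall n, (d <= n)%N -> y (Ja n) = al /\ y (Jb n) = be).

Lemma Inv_inf al be ga d y : Inv al be ga d y -> aInf y = al /\ bInf y = be.
Proof.
move=> [_ [_ H]]; split.
- by apply: (@aInf_spec y d) => n /H [].
- by apply: (@bInf_spec y d) => n /H [].
Qed.

Lemma Inv_step al be ga d y :
  be `&` ga <= al -> al `&` ga <= be -> al `&` be <= ga ->
  Inv al be ga d y -> Inv al be ga d (step y).
Proof.
move=> H1 H2 H3 Hy; have [Ha Hb] := Inv_inf Hy.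
move: Hy => [Hle [Hc Heq]].
split; [|split].
- case=> [|m] /=; first exact: Hle.
  have [A1 B1] := Hle m.+1; have [A0 B0] := Hle m.
  split; rewrite leUx.
  + by rewrite A1 /=; apply: le_trans H1; rewrite Hc leI2.
  + by rewrite B1 /=; apply: le_trans H2; rewrite Hc leI2.
- rewrite /= Ha Hb Hc; apply/eqP; rewrite eq_le leUl leUx lexx H3 //.
- case=> [|m] /= Hn; first exact: Heq.
  have [A1 B1] := Heq _ Hn; have [A0 B0] := Hle m.
  rewrite A1 B1 Hc; split; apply/eqP; rewrite eq_le leUl leUx lexx /=.
  + by rewrite andbT; apply: le_trans H1; rewrite leI2.
  + by rewrite andbT; apply: le_trans H2; rewrite leI2.
Qed.

End S.

Theorem lemma5p4 (disp : Order.disp_t) (L : bLatticeType disp) (h : nat) :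
  (0 < h)%N -> @hmodular disp L h ->
  forall x : JK -> L, inA' x ->
  forall k : nat,
    (forall n : nat, (dx x <= n)%N ->
       stepk k x (Ja n) = aInf x /\ stepk k x (Jb n) = bInf x) /\
    (dx (stepk k x) <= dx x)%N.
Proof.
move=> _ _ x [HA Hell] k.
have [d0 Hd0] := inA_stab HA.
have [Hst _] := dx_spec Hd0.
set d := dx x in Hst *.
set al := aInf x in Hst *; set be := bInf x in Hst *; set ga := x Jc.
case: Hell => Ha Hb Hc.
have H1 : (be `&` ga <= al)%O.
  have E : aInf (step x) = (al `|` (be `&` ga))%O.
    apply: (@aInf_spec _ _ (step x) d.+1) => [[|m]] //= Hm.
    by have [-> _] := Hst m.+1 (ltnW Hm); have [_ ->] := Hst m Hm.
  by rewrite Ha in E; rewrite /al E leUr.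
have H2 : (al `&` ga <= be)%O.
  have E : bInf (step x) = (be `|` (al `&` ga))%O.
    apply: (@bInf_spec _ _ (step x) d.+1) => [[|m]] //= Hm.
    by have [_ ->] := Hst m.+1 (ltnW Hm); have [-> _] := Hst m Hm.
  by rewrite Hb in E; rewrite /be E leUr.
have H3 : (al `&` be <= ga)%O.
  by move: Hc => /= Hc; rewrite /ga -Hc leUr.
have I0 : Inv al be ga d x.
  split; [|split] => //.
  move=> m; have [A B] := Hst (maxn m d) (leq_maxr _ _).
  rewrite /al /be -A -B; split; apply: (proj1 HA); rewrite /= leq_maxl //.
have Ik : Inv al be ga d (stepk k x).
  elim: k => [//|k IH]; rewrite /stepk iterS; exact: Inv_step.
have [Ia Ib] := Inv_inf Ik.
move: Ik => [_ [_ Heq]]; split => //.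
have Hs : stab (stepk k x) d by move=> n /Heq; rewrite Ia Ib.
exact: (dx_spec Hs).2.
Qed.
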